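(* Let $X$ be a set and let $((a_{i,j})_{j\geq 1})_{i\geq 1}\in (X^{\mathbb{N}})^{\mathbb{N}}$ be a countable family of sequences in $X$. Let $(b_n)_{n\geq 1}\in X^{\mathbb{N}}$ be the output of the sequence interleaving algorithm applied to this family. Then $(b_n)$ is eventually periodic if and only if at least one of the input sequences $(a_{i,j})_{j\geq 1}$ is eventually periodic.
   Context: A finite tuple $A=(a_1,\ldots,a_n)$ is called finite-periodic with period $k$ if $k<n$, $a_{i+k}=a_i$ for $i=1,\ldots,n-k$, and $k$ is minimal with this property (for every $h<k$ there is some $i\le n-h$ with $a_i\neq a_{i+h}$); then $(a_1,\ldots,a_k)$ is called the finite-fundamental string of $A$. Let $(i_k)_{k\geq 1}=(1,2,1,2,3,1,2,3,4,1,2,3,4,5,\ldots)$; explicitly, with $T_n=n(n+1)/2$, for $T_n\le k<T_{n+1}$ one has $i_k=k-T_n+1$. The sequence interleaving algorithm produces the output as the concatenation $B_1+B_2+\cdots$ of blocks, where block $B_l$ has length $2^l$, as follows: (1) Start with $k=l=1$ and a Boolean flag $P=$ false. (2) Form $B_l$ by removing the first $2^l$ not-yet-used terms of the sequence $(a_{i_k,j})_j$ (terms used in a block are never used in a later block; each block taken from a sequence starts at its first unused term). (3) If $P=$ false: if $B_l$ is finite-periodic, set $P=$ true and let $S$ be the finite-fundamental string of $B_l$; otherwise increment $k$ by $1$. If $P=$ true: $S$ is the finite-fundamental string of some concatenation $B_h+\cdots+B_{l-1}$ with $h<l$ (the blocks produced since $P$ last became true); check whether $B_h+\cdots+B_l$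 is finite-periodic with finite-fundamental string $S$; if not, set $P=$ false and increment $k$ by $1$. (4) Increment $l$ by $1$ and return to step (2). A sequence $(c_n)$ is eventually periodic if there exist $r\ge 0$ and $m\ge 1$ with $c_{n+m}=c_n$ for all $n>r$. *)

(* Defs.v *)
From mathcomp Require Import all_boot.
From Stdlib Require Import ClassicalEpsilon.
Set Implicit Arguments. Unset Strict Implicit. Unset Printing Implicit Defensive.

Definition decP (P : Prop) : bool :=
  if excluded_middle_informative P then true else false.

Section Interleave.
Variable X : Type.

(* p is a period of s : 0 < p < |s| and s_i = s_{i+p} whenever i+p < |s|
   (0-based indices; [onth] avoids default elements). *)
Definition is_period (s : seq X) (p : nat) : Prop :=
  (0 < p < size s)%N /\ forall i, (i + p < size s)%N -> onth s i = onth s (i + p).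

Definition finite_periodic (s : seq X) : Prop := exists p, is_period s p.

Definition min_period (s : seq X) : nat :=
  find (fun p => decP (is_period s p)) (iota 0 (size s)).

Definition fund_string (s : seq X) : seq X := take (min_period s) s.

(* ---------- the index sequence (i_k) = 1,2,1,2,3,1,2,3,4,... ---------- *)
Definition tri (n : nat) : nat := (n * n.+1) %/ 2.

Definition troot (k : nat) : nat :=
  (fix f m := match m with
              | 0 => 0
              | m'.+1 => if (tri m <= k)%N then m else f m'
              end) k.

Definition iseq (k : nat) : nat := k - tri (troot k) + 1.

(* The family ((a_{i,j})_{j>=1})_{i>=1} is represented 0-based:
   a_{i,j} = a (i-1) (j-1). *)
Variable a : nat -> nat -> X.

Record state := State {
  st_k : nat;
  st_P : bool;
  st_S : seq X;
  st_acc : seq X;          (* B_h ++ ... ++ B_{l-1} since P last became true *)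
  st_pos : nat -> nat      (* number of used terms of each (0-based) sequence *)
}.

Definition init_state : state := State 1 false [::] [::] (fun _ => 0).

(* 0-based index of the sequence used in the current state *)
Definition cur_seq (st : state) : nat := (iseq (st_k st)).-1.

Definition block (l : nat) (st : state) : seq X :=
  mkseq (fun j => a (cur_seq st) (st_pos st (cur_seq st) + j)) (2 ^ l).

Definition step (l : nat) (st : state) : state :=
  let i := cur_seq st in
  let B := block l st in
  let pos' := fun m => if m == i then st_pos st i + 2 ^ l else st_pos st m in
  if ~~ st_P st then
    if decP (finite_periodic B)
    then State (st_k st) true (fund_string B) B pos'
    else State (st_k st).+1 false (st_S st) (st_acc st) pos'
  else
    let C := st_acc st ++ B in
    if decP (finite_periodic C /\ fund_string C = st_S st)
    then State (st_k st) true (st_S st) C pos'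
    else State (st_k st).+1 false (st_S st) (st_acc st) pos'.

(* state_before n = state just before forming block B_{n+1} *)
Fixpoint state_before (n : nat) : state :=
  match n with
  | 0 => init_state
  | n'.+1 => step n (state_before n')
  end.

Definition B (l : nat) : seq X := block l (state_before l.-1).

(* output b = B_1 ++ B_2 ++ ... (0-based): position n lies in block
   l = floor(log2 (n+2)), at offset n + 2 - 2^l *)
Definition interleave_output (n : nat) : X :=
  let l := trunc_log 2 (n + 2) in
  let st := state_before l.-1 in
  a (cur_seq st) (st_pos st (cur_seq st) + (n + 2 - 2 ^ l)).

End Interleave.

Definition eventually_periodic (X : Type) (c : nat -> X) : Prop :=
  exists r m : nat, (0 < m)%N /\ forall n, (r < n)%N -> c (n + m) = c n.

(* Main.v *)
From mathcomp Require Import all_boot zify.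
From Stdlib Require Import ClassicalEpsilon Classical.
Require Import Defs.
Set Implicit Arguments. Unset Strict Implicit. Unset Printing Implicit Defensive.

Lemma decPT (Q : Prop) : Q -> decP Q = true.
Proof. by rewrite /decP; case: excluded_middle_informative. Qed.
Lemma decP_true (Q : Prop) : decP Q = true -> Q.
Proof. by rewrite /decP; case: excluded_middle_informative. Qed.

Lemma onth_mkseq X (w : nat -> X) N i :
  onth (mkseq w N) i = if i < N then Some (w i) else None.
Proof.
rewrite onthE; case: ltnP => h.
  by rewrite (nth_map (w 0)) ?size_mkseq // nth_mkseq.
by rewrite nth_default // size_map size_mkseq.
Qed.

Lemma is_period_mkseq X (w : nat -> X) N p :
  is_period (mkseq w N) p <-> (0 < p < N /\ forall i, i + p < N -> w i = w (i + p)).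
Proof.
rewrite /is_period size_mkseq; split=> [[h H]|[h H]]; split=> // i hi.
  have := H i hi; rewrite !onth_mkseq hi.
  have -> : i < N by lia.
  by case.
rewrite !onth_mkseq hi.
have -> : i < N by lia.
by rewrite H.
Qed.

Lemma minper_le X (s : seq X) q :
  is_period s q -> min_period s <= q /\ is_period s (min_period s).
Proof.
move=> hq.
set P := fun p => decP (is_period s p).
have Pq : P q by rewrite /P decPT.
have qs : q < size s by case: hq => /andP[].
have Hhas : has P (iota 0 (size s)).
  by apply/hasP; exists q => //; rewrite mem_iota.
split.
  rewrite /min_period -/P leqNgt; apply/negP => lt.
  have := before_find 0 lt; rewrite nth_iota // add0n.
  by rewrite Pq.
have := nth_find 0 Hhas.
have := has_find P (iota 0 (size s)); rewrite Hhas size_iota => fs.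
rewrite nth_iota // add0n /P => /decP_true.
done.
Qed.

Lemma fp_minper X (s : seq X) :
  finite_periodic s -> is_period s (min_period s).
Proof. by case=> q /minper_le[]. Qed.

Lemma size_fund X (s : seq X) :
  finite_periodic s -> size (fund_string s) = min_period s.
Proof.
move=> /fp_minper [/andP[_ h] _].
by rewrite /fund_string size_take h.
Qed.

Lemma take_mkseq X (w : nat -> X) p N : p <= N -> take p (mkseq w N) = mkseq w p.
Proof.
move=> h; rewrite /mkseq -map_take take_iota.
by rewrite (minn_idPl h).
Qed.

Lemma mkseq_add X (w : nat -> X) m n :
  mkseq w (m + n) = mkseq w m ++ mkseq (fun j => w (m + j)) n.
Proof.
rewrite /mkseq iotaD map_cat add0n; congr (_ ++ _).
by rewrite -{1}(addn0 m) iotaDl -map_comp.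
Qed.

Lemma per_mul X (w : nat -> X) m : (forall j, w (j + m) = w j) ->
  forall q j, w (j + q * m) = w j.
Proof.
move=> H; elim=> [|q IH] j; first by rewrite mul0n addn0.
by rewrite mulSn addnA IH H.
Qed.

Lemma per_from_block X (w : nat -> X) N p m :
  is_period (mkseq w N) p -> (forall j, w (j + m) = w j) -> 0 < m -> p + m <= N ->
  forall j, w (j + p) = w j.
Proof.
move=> /is_period_mkseq [hp Hp] Hm m0 pm j.
have e : j = j %% m + j %/ m * m by rewrite addnC -divn_eq.
have lt := ltn_pmod j m0.
move: e lt; set r := j %% m; set q := j %/ m => e lt.
rewrite e -addnA (addnC (q * m)) addnA !(per_mul Hm).
rewrite -Hp //; lia.
Qed.

Lemma per_is_period X (w : nat -> X) p K :
  (forall j, w (j + p) = w j) -> 0 < p < K -> is_period (mkseq w K) p.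
Proof. by move=> H h; apply/is_period_mkseq; split=> // i _; rewrite H. Qed.

Lemma minper_prefix X (w : nat -> X) p N N' :
  (forall j, w (j + p) = w j) -> 0 < p < N -> N <= N' ->
  p = min_period (mkseq w N) ->
  min_period (mkseq w N') = p /\ is_period (mkseq w N') p.
Proof.
move=> H hp NN' ep.
have hp' : 0 < p < N' by lia.
have iP := per_is_period H hp'.
split=> //.
have [le1 iq] := minper_le iP.
move/is_period_mkseq: iq => [hq Hq].
have : is_period (mkseq w N) (min_period (mkseq w N')).
  apply/is_period_mkseq; split; first by lia.
  by move=> i hi; apply: Hq; lia.
move=> /minper_le [le2 _].
lia.
Qed.

Definition start (t : nat) := 2 ^ t.+1 - 2.

Lemma two_le_exp t : 2 <= 2 ^ t.+1.
Proof. by rewrite expnS; have := expn_gt0 2 t; lia. Qed.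

Lemma start_S t : start t.+1 = start t + 2 ^ t.+1.
Proof. rewrite /start (expnS 2 t.+1); have := two_le_exp t; lia. Qed.

Lemma start_mono t u : t <= u -> start t <= start u.
Proof.
move=> h; rewrite /start; have : 2 ^ t.+1 <= 2 ^ u.+1 by rewrite leq_exp2l.
lia.
Qed.

Lemma start_ge t d : d <= start (t + d) - start t.
Proof.
elim: d => [|d IH]; first by [].
rewrite addnS start_S; have := start_mono (leq_addr d t); have := expn_gt0 2 (t + d).+1.
lia.
Qed.

Lemma start_ge_t t : t <= start t.
Proof. by move: (start_ge 0 t); rewrite add0n subn0. Qed.

Lemma out_block X (a : nat -> nat -> X) t j : j < 2 ^ t.+1 ->
  interleave_output a (start t + j) =
  a (cur_seq (state_before a t)) (st_pos (state_before a t) (cur_seq (state_before a t)) + j).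
Proof.
move=> hj; rewrite /interleave_output.
have h2 := two_le_exp t.
have -> : trunc_log 2 (start t + j + 2) = t.+1.
  apply: trunc_log_eq => //; rewrite /start (expnS 2 t.+1); apply/andP; split; lia.
rewrite /=; congr (a _ (_ + _)); rewrite /start; lia.
Qed.

Lemma eq_in_mkseq X (f g : nat -> X) n :
  (forall j, j < n -> f j = g j) -> mkseq f n = mkseq g n.
Proof. by move=> H; rewrite /mkseq; apply/eq_in_map => j; rewrite mem_iota => /andP[_ h]; apply: H. Qed.

Lemma block_out X (a : nat -> nat -> X) t :
  block a t.+1 (state_before a t) =
  mkseq (fun j => interleave_output a (start t + j)) (2 ^ t.+1).
Proof. by apply: eq_in_mkseq => j hj; rewrite out_block. Qed.

Lemma covering n : exists t j, j < 2 ^ t.+1 /\ n = start t + j.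
Proof.
have hpos : 0 < n + 2 by rewrite addn2.
have := trunc_log_bounds (isT : 1 < 2) hpos; rewrite /=.
set l := trunc_log 2 (n + 2) => /andP[h1 h2].
case: l h1 h2 => [|t] h1 h2; first by rewrite expn1 in h2; lia.
exists t, (n + 2 - 2 ^ t.+1); split.
  by rewrite expnS in h2; lia.
rewrite /start; have := two_le_exp t; lia.
Qed.

Lemma step_pos X (a : nat -> nat -> X) l st :
  st_pos (step a l st) = fun m => if m == cur_seq st then st_pos st (cur_seq st) + 2 ^ l
                                  else st_pos st m.
Proof. by rewrite /step; case: ifP => _; case: ifP. Qed.

Lemma step_cases X (a : nat -> nat -> X) l st :
  (st_k (step a l st) = st_k st /\ st_P (step a l st) = true) \/
  (st_k (step a l st) = (st_k st).+1 /\ st_P (step a l st) = false).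
Proof. by rewrite /step; case: ifP => _; case: ifP => _; auto. Qed.

Notation sb := state_before.

Lemma sbS X (a : nat -> nat -> X) t : sb a t.+1 = step a t.+1 (sb a t).
Proof. by []. Qed.

Lemma P_true_k X (a : nat -> nat -> X) t :
  st_P (sb a t.+1) = true -> st_k (sb a t.+1) = st_k (sb a t).
Proof. by rewrite sbS; case: (step_cases a t.+1 (sb a t)) => [[-> _]|[_ ->]]. Qed.

Lemma P_false_k X (a : nat -> nat -> X) t :
  st_P (sb a t.+1) = false -> st_k (sb a t.+1) = (st_k (sb a t)).+1.
Proof. by rewrite sbS; case: (step_cases a t.+1 (sb a t)) => [[_ ->]|[-> _]]. Qed.

Lemma k_step X (a : nat -> nat -> X) t : st_k (sb a t) <= st_k (sb a t.+1).
Proof. by rewrite sbS; case: (step_cases a t.+1 (sb a t)) => [[-> _]|[-> _]]. Qed.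

Lemma k_mono X (a : nat -> nat -> X) t d : st_k (sb a t) <= st_k (sb a (t + d)).
Proof.
elim: d => [|d IH]; first by rewrite addn0.
by rewrite addnS; apply: leq_trans IH (k_step _ _).
Qed.

Lemma pos_step X (a : nat -> nat -> X) t j : st_pos (sb a t) j <= st_pos (sb a t.+1) j.
Proof.
rewrite sbS step_pos; case: eqP => [->|] //.
by rewrite leq_addr.
Qed.

Lemma pos_mono X (a : nat -> nat -> X) t d j : st_pos (sb a t) j <= st_pos (sb a (t + d)) j.
Proof.
elim: d => [|d IH]; first by rewrite addn0.
by rewrite addnS; apply: leq_trans IH (pos_step _ _ _).
Qed.

Lemma pos_cur X (a : nat -> nat -> X) t :
  st_pos (sb a t.+1) (cur_seq (sb a t)) = st_pos (sb a t) (cur_seq (sb a t)) + 2 ^ t.+1.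
Proof. by rewrite sbS step_pos eqxx. Qed.

Lemma track X (a : nat -> nat -> X) T d :
  (forall u, T < u <= T + d -> st_P (sb a u) = true) ->
  cur_seq (sb a (T + d)) = cur_seq (sb a T) /\
  st_pos (sb a (T + d)) (cur_seq (sb a T)) =
    st_pos (sb a T) (cur_seq (sb a T)) + (start (T + d) - start T).
Proof.
elim: d => [|d IH] H.
  by rewrite addn0 subnn addn0.
have [e1 e2] := IH (fun u hu => H u ltac:(lia)).
have Pt : st_P (sb a (T + d).+1) = true by apply: H; lia.
rewrite addnS.
have ek := P_true_k Pt.
have ec : cur_seq (sb a (T + d).+1) = cur_seq (sb a (T + d)) by rewrite /cur_seq ek.
rewrite ec e1; split => //.
have := pos_cur a (T + d); rewrite e1 e2 => ->.
rewrite start_S; have := start_mono (leq_addr d T); lia.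
Qed.

Lemma out_const X (a : nat -> nat -> X) T :
  (forall u, T < u -> st_P (sb a u) = true) ->
  forall n, start T <= n ->
  interleave_output a n = a (cur_seq (sb a T)) (st_pos (sb a T) (cur_seq (sb a T)) + (n - start T)).
Proof.
move=> H n hn.
have [t [j [hj en]]] := covering n.
have Tt : T <= t.
  rewrite leqNgt; apply/negP => lt.
  have := start_mono lt; rewrite start_S; lia.
rewrite en out_block //.
have [d ed] : exists d, t = T + d by exists (t - T); lia.
rewrite ed in hj *.
have [e1 e2] := @track X a T d (fun u hu => H u ltac:(lia)).
rewrite e1 e2; congr (a _ _).
have := start_mono (leq_addr d T); lia.
Qed.

Definition cond X (st : state X) (C : seq X) := finite_periodic C /\ fund_string C = st_S st.

Lemma decPF (Q : Prop) : ~ Q -> decP Q = false.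
Proof. by rewrite /decP; case: excluded_middle_informative. Qed.

Lemma step_false_inv X (a : nat -> nat -> X) l st :
  st_P st = false -> st_P (step a l st) = true ->
  finite_periodic (block a l st) /\ st_S (step a l st) = fund_string (block a l st) /\
  st_acc (step a l st) = block a l st.
Proof.
move=> P0; case: (classic (finite_periodic (block a l st))) => h.
  by rewrite /step P0 /= (decPT h).
by rewrite /step P0 /= (decPF h).
Qed.

Lemma step_true_inv X (a : nat -> nat -> X) l st :
  st_P st = true -> st_P (step a l st) = true ->
  cond st (st_acc st ++ block a l st) /\ st_S (step a l st) = st_S st /\
  st_acc (step a l st) = st_acc st ++ block a l st.
Proof.
move=> P0; case: (classic (cond st (st_acc st ++ block a l st))) => h.
  by rewrite /step P0 /= (decPT h).
by rewrite /step P0 /= (decPF h).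
Qed.

Lemma step_false_go X (a : nat -> nat -> X) l st :
  st_P st = false -> finite_periodic (block a l st) ->
  st_P (step a l st) = true /\ st_S (step a l st) = fund_string (block a l st) /\
  st_acc (step a l st) = block a l st.
Proof. by move=> P0 h; rewrite /step P0 /= (decPT h). Qed.

Lemma step_true_go X (a : nat -> nat -> X) l st :
  st_P st = true -> cond st (st_acc st ++ block a l st) ->
  st_P (step a l st) = true /\ st_S (step a l st) = st_S st /\
  st_acc (step a l st) = st_acc st ++ block a l st.
Proof. by move=> P0 h; rewrite /step P0 /= (decPT h). Qed.

Lemma stab X (a : nat -> nat -> X) T (w : nat -> X) :
  st_P (sb a T) = false ->
  block a T.+1 (sb a T) = mkseq w (2 ^ T.+1) ->
  finite_periodic (mkseq w (2 ^ T.+1)) ->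
  (forall j, w (j + min_period (mkseq w (2 ^ T.+1))) = w j) ->
  (forall d, (forall u, T < u <= T + d -> st_P (sb a u) = true) ->
     block a (T + d).+1 (sb a (T + d)) =
     mkseq (fun j => w (start (T + d) - start T + j)) (2 ^ (T + d).+1)) ->
  forall u, T < u -> st_P (sb a u) = true.
Proof.
move=> P0 HB Hfp Hw H.
set p := min_period (mkseq w (2 ^ T.+1)) in Hw.
have ip : is_period (mkseq w (2 ^ T.+1)) p := fp_minper Hfp.
have [hp _] := ip; rewrite size_mkseq in hp.
have inv : forall d, (forall u, T < u <= T + d.+1 -> st_P (sb a u) = true) /\
   st_S (sb a (T + d.+1)) = mkseq w p /\
   st_acc (sb a (T + d.+1)) = mkseq w (start (T + d.+1) - start T).
  elim=> [|d [IH1 [IH2 IH3]]].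
    have HB' := HB; rewrite -HB in Hfp.
    have [e1 [e2 e3]] := step_false_go (a := a) (l := T.+1) P0 Hfp.
    rewrite addn1 sbS e2 e3 HB /fund_string -/p take_mkseq; last by lia.
    split; last split => //.
      move=> u hu; have -> : u = T.+1 by lia.
      by rewrite sbS.
    by rewrite start_S addKn.
  have Pt : st_P (sb a (T + d.+1)) = true by apply: IH1; lia.
  have Hb := H d.+1 IH1.
  have eC : st_acc (sb a (T + d.+1)) ++ block a (T + d.+1).+1 (sb a (T + d.+1)) =
            mkseq w (start (T + d.+2) - start T).
    rewrite IH3 Hb -mkseq_add; congr mkseq.
    rewrite (addnS T d.+1) start_S; have := start_mono (leq_addr d.+1 T); lia.
  have NN : 2 ^ T.+1 <= start (T + d.+2) - start T.
    rewrite (addnS T d.+1) start_S.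
    have := start_mono (leq_addr d.+1 T).
    have : 2 ^ T.+1 <= 2 ^ (T + d.+1).+1 by rewrite leq_exp2l //; lia.
    lia.
  have [mC iC] := minper_prefix Hw hp NN erefl.
  have hc : cond (sb a (T + d.+1)) (st_acc (sb a (T + d.+1)) ++ block a (T + d.+1).+1 (sb a (T + d.+1))).
    rewrite eC; split; first by exists p.
    rewrite IH2 /fund_string mC take_mkseq //.
    by case: iC => /andP[_ /ltnW]; rewrite size_mkseq.
  have [e1 [e2 e3]] := step_true_go Pt hc.
  rewrite (addnS T d.+1) sbS e2 e3 eC IH2 -(addnS T d.+1); split; last split => //.
  move=> u hu; case: (ltnP (T + d.+1) u) => hu2.
    have -> : u = (T + d.+1).+1 by lia.
    by rewrite sbS.
  by apply: IH1; lia.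
move=> u hu.
have [+ _] := inv (u - T).-1.
apply; lia.
Qed.

Lemma const_per X (a : nat -> nat -> X) T :
  st_P (sb a T) = false ->
  (forall u, T < u -> st_P (sb a u) = true) ->
  eventually_periodic (interleave_output a).
Proof.
move=> P0 H.
set w := fun j => interleave_output a (start T + j).
set Bk := block a T.+1 (sb a T).
have HB : Bk = mkseq w (2 ^ T.+1) by rewrite /Bk block_out.
have inv : forall d, st_S (sb a (T + d.+1)) = fund_string Bk /\ finite_periodic Bk /\
   st_acc (sb a (T + d.+1)) = mkseq w (start (T + d.+1) - start T) /\
   finite_periodic (st_acc (sb a (T + d.+1))) /\
   fund_string (st_acc (sb a (T + d.+1))) = st_S (sb a (T + d.+1)).
  elim=> [|d [IH1 [IH0 [IH2 [IH3 IH4]]]]].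
    have P1 : st_P (step a T.+1 (sb a T)) = true by rewrite -sbS; apply: H.
    have [f1 [f2 f3]] := step_false_inv P0 P1.
    rewrite addn1 sbS f2 f3 -/Bk; split => //; split => //; split.
      by rewrite HB start_S addKn.
    done.
  have Pt : st_P (sb a (T + d.+1)) = true by apply: H; lia.
  have P1 : st_P (step a (T + d.+1).+1 (sb a (T + d.+1))) = true by rewrite -sbS; apply: H; lia.
  have [[c1 c2] [f2 f3]] := step_true_inv Pt P1.
  have eC : st_acc (sb a (T + d.+1)) ++ block a (T + d.+1).+1 (sb a (T + d.+1)) =
            mkseq w (start (T + d.+2) - start T).
    rewrite IH2 block_out.
    have sm := start_mono (leq_addr d.+1 T).
    rewrite (addnS T d.+1) start_S.
    have -> : start (T + d.+1) + 2 ^ (T + d.+1).+1 - start T =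
              start (T + d.+1) - start T + 2 ^ (T + d.+1).+1 by lia.
    rewrite mkseq_add; congr (_ ++ _); apply: eq_mkseq => j.
    by rewrite /w; congr interleave_output; lia.
  rewrite (addnS T d.+1) sbS f2 f3; split => //; split => //; split.
    by rewrite eC (addnS T d.+1).
  by split.
have [fB _] := (inv 0).2.
have ipB := fp_minper fB.
set p := min_period Bk in ipB.
have [/andP [p0 _] _] := ipB.
have Hw : forall j, w (j + p) = w j.
  move=> j.
  have [e1 [_ [e2 [e3 e4]]]] := inv (j + p).
  have mp : min_period (st_acc (sb a (T + (j + p).+1))) = p.
    by rewrite -size_fund // e4 e1 size_fund.
  have := fp_minper e3; rewrite mp e2 => /is_period_mkseq [_ Hq].
  symmetry; apply: Hq.
  have := start_ge T (j + p).+1; lia.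
exists (start T), p; split => // n hn.
have -> : n = start T + (n - start T) by lia.
rewrite -addnA.
exact: (Hw (n - start T)).
Qed.

Lemma forward X (a : nat -> nat -> X) :
  eventually_periodic (interleave_output a) -> exists i, eventually_periodic (a i).
Proof.
case=> r [M [M0 HM]].
set T0 := r + M.
have hConst : exists T, forall u, T < u -> st_P (sb a u) = true.
  case: (classic (exists T, T0 <= T /\ st_P (sb a T) = false)) => [[T [hT PT]]|nT].
  - exists T; set w := fun j => interleave_output a (start T + j).
    have HB : block a T.+1 (sb a T) = mkseq w (2 ^ T.+1) by rewrite block_out.
    have ltT := ltn_expl T (isT : 1 < 2).
    have ltM : M < 2 ^ T.+1 by rewrite expnS; lia.
    have wM : forall j, w (j + M) = w j.
      by move=> j; rewrite /w addnA HM //; have := start_ge_t T; lia.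
    have iM : is_period (mkseq w (2 ^ T.+1)) M by apply: per_is_period; rewrite ?M0.
    have [le1 ip] := minper_le iM.
    have Hfp : finite_periodic (mkseq w (2 ^ T.+1)) by exists M.
    apply: (stab PT HB Hfp).
      apply: (per_from_block ip wM M0).
      by move: hT; rewrite /T0 => hT; have e2 := expnS 2 T; lia.
    move=> d _; rewrite block_out; apply: eq_mkseq => j.
    by rewrite /w; congr interleave_output; have := start_mono (leq_addr d T); lia.
  - exists T0 => u hu; case e: (st_P (sb a u)) => //.
    by exfalso; apply: nT; exists u; split => //; lia.
case: hConst => T HT.
exists (cur_seq (sb a T)).
set i := cur_seq (sb a T); set ps := st_pos (sb a T) i.
exists (ps + r), M; split => // x hx.
have hn : r < start T + (x - ps) by lia.
have := HM _ hn.
rewrite (@out_const X a T HT (start T + (x - ps) + M) ltac:(lia)).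
rewrite (@out_const X a T HT (start T + (x - ps)) ltac:(lia)) -/i -/ps.
have -> : ps + (start T + (x - ps) + M - start T) = x + M by lia.
by have -> : ps + (start T + (x - ps) - start T) = x by lia.
Qed.

Definition trf (k : nat) : nat -> nat :=
  fix f m := match m with 0 => 0 | m'.+1 => if tri m <= k then m else f m' end.

Lemma trfS k m : trf k m.+1 = if tri m.+1 <= k then m.+1 else trf k m.
Proof. by []. Qed.

Lemma troot_trf k : troot k = trf k k.
Proof. by []. Qed.

Lemma tri_S n : tri n.+1 = tri n + n.+1.
Proof.
rewrite /tri (_ : n.+1 * n.+2 = n.+1 * 2 + n * n.+1); last by nia.
by rewrite divnMDl // addnC.
Qed.

Lemma tri_mono m n : m <= n -> tri m <= tri n.
Proof.
move=> h; rewrite -(subnKC h); elim: (n - m) => [|d IH]; first by rewrite addn0.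
by rewrite addnS tri_S; apply: leq_trans IH (leq_addr _ _).
Qed.

Lemma tri_ge n : n <= tri n.
Proof. by elim: n => [|n IH] //; rewrite tri_S; lia. Qed.

Lemma trf_spec K n : tri n <= K -> K < tri n.+1 -> forall d, trf K (n + d) = n.
Proof.
move=> h1 h2; elim=> [|d IH].
  by rewrite addn0; case: n h1 h2 => [|n'] // h1 _; rewrite trfS h1.
rewrite addnS trfS.
have : tri n.+1 <= tri (n + d).+1 by apply: tri_mono; lia.
move=> h3; have -> : (tri (n + d).+1 <= K) = false by apply/negbTE; rewrite -ltnNge; lia.
exact: IH.
Qed.

Lemma iseq_val n i : i <= n -> iseq (tri n + i) = i.+1.
Proof.
move=> hi; rewrite /iseq troot_trf.
have h1 : tri n <= tri n + i by rewrite leq_addr.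
have h2 : tri n + i < tri n.+1 by rewrite tri_S; lia.
have := trf_spec h1 h2 (tri n + i - n).
have := tri_ge n.
move=> hn; rewrite subnKC; last by lia.
by move=> ->; rewrite addKn addn1.
Qed.

Lemma st0 X (a : nat -> nat -> X) : st_k (sb a 0) = 1 /\ st_P (sb a 0) = false.
Proof. by []. Qed.

Lemma unbounded X (a : nat -> nat -> X) :
  (forall N, exists t, N <= t /\ st_P (sb a t) = false) ->
  forall K, exists t, K <= st_k (sb a t).
Proof.
move=> Hinf; elim=> [|K [t ht]]; first by exists 0.
have [u [hu Pu]] := Hinf t.+1.
case: u hu Pu => [|v] // hv Pv.
exists v.+1; rewrite (P_false_k Pv).
have := k_mono a t (v - t); rewrite subnKC; last by lia.
lia.
Qed.

Lemma ivt X (a : nat -> nat -> X) t K : st_k (sb a t) = K ->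
  forall d, K < st_k (sb a (t + d)) -> exists u, st_k (sb a u) = K.+1 /\ st_P (sb a u) = false.
Proof.
move=> hK; elim=> [|d IH]; first by rewrite addn0 hK ltnn.
case: (ltnP K (st_k (sb a (t + d)))) => h; first by move=> _; apply: IH.
have := k_mono a t d; rewrite hK => h'.
rewrite addnS => h2.
exists (t + d).+1.
case: (step_cases a (t + d).+1 (sb a (t + d))) => [[e1 e2]|[e1 e2]]; rewrite -sbS in e1 e2.
  by lia.
by split => //; lia.
Qed.

Lemma every_value X (a : nat -> nat -> X) :
  (forall N, exists t, N <= t /\ st_P (sb a t) = false) ->
  forall K, 0 < K -> exists t, st_k (sb a t) = K /\ st_P (sb a t) = false.
Proof.
move=> Hinf; elim=> [|K IH] // _.
case: K IH => [|K] IH; first by exists 0.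
have [t [ht _]] := IH isT.
have [t' ht'] := unbounded Hinf K.+2.
have lt : t < t'.
  rewrite ltnNge; apply/negP => le.
  have := k_mono a t' (t - t'); rewrite subnKC //; lia.
have := @ivt X a t K.+1 ht (t' - t); rewrite subnKC; last by lia.
by move=> /(_ ltac:(lia)).
Qed.

Lemma visits X (a : nat -> nat -> X) :
  (forall N, exists t, N <= t /\ st_P (sb a t) = false) ->
  forall i c, exists t, c <= t /\ st_P (sb a t) = false /\ cur_seq (sb a t) = i /\
    c <= st_pos (sb a t) i.
Proof.
move=> Hinf i; elim=> [|c [t [ct [Pt [ci cp]]]]].
  have K0 : 0 < tri i.+1 + i by have := tri_ge i.+1; lia.
  have [t [kt Pt]] := every_value Hinf K0.
  exists t; split => //; split => //; split => //.
  by rewrite /cur_seq kt iseq_val.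
set n := st_k (sb a t) + i.+1.
have K0 : 0 < tri n + i by have := tri_ge n; rewrite /n; lia.
have [t' [kt Pt']] := every_value Hinf K0.
have lt : t < t'.
  rewrite ltnNge; apply/negP => le.
  have := k_mono a t' (t - t'); rewrite subnKC // kt.
  have := tri_ge n; rewrite /n; lia.
exists t'; split; first by lia.
split => //; split; first by rewrite /cur_seq kt iseq_val // /n; lia.
have := pos_mono a t.+1 (t' - t.+1) i; rewrite subnKC //.
have := pos_cur a t; rewrite ci => ->.
have := expn_gt0 2 t.+1; lia.
Qed.

Lemma backward X (a : nat -> nat -> X) :
  (exists i, eventually_periodic (a i)) -> eventually_periodic (interleave_output a).
Proof.
case=> i [r [m [m0 Hm]]].
case: (classic (exists T, st_P (sb a T) = false /\ forall u, T < u -> st_P (sb a u) = true))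
  => [[T [PT HT]]|nC].
  exact: const_per PT HT.
have NC : forall T, st_P (sb a T) = false -> exists u, T < u /\ st_P (sb a u) = false.
  move=> T PT; apply: NNPP => nu; apply: nC; exists T; split => // u hu.
  case e: (st_P (sb a u)) => //; exfalso; apply: nu; exists u; by split.
have Hinf : forall N, exists t, N <= t /\ st_P (sb a t) = false.
  elim=> [|N [t [ht Pt]]]; first by exists 0.
  have [u [hu Pu]] := NC t Pt; exists u; split => //; lia.
have [t [ct [Pt [ci cp]]]] := visits Hinf i (r + m).+1.
exfalso; apply: nC; exists t; split => //.
set w := fun j => a i (st_pos (sb a t) i + j).
have HB : block a t.+1 (sb a t) = mkseq w (2 ^ t.+1) by rewrite /block ci.
have ltT := ltn_expl t (isT : 1 < 2).
have ltM : m < 2 ^ t.+1 by rewrite expnS; lia.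
have wM : forall j, w (j + m) = w j by move=> j; rewrite /w addnA Hm //; lia.
have iM : is_period (mkseq w (2 ^ t.+1)) m by apply: per_is_period; rewrite ?m0.
have [le1 ip] := minper_le iM.
have Hfp : finite_periodic (mkseq w (2 ^ t.+1)) by exists m.
apply: (stab Pt HB Hfp).
  apply: (per_from_block ip wM m0).
  by have e2 := expnS 2 t; lia.
move=> d H.
have [e1 e2] := @track X a t d H.
rewrite /block e1 e2; apply: eq_mkseq => j; rewrite /w ci addnA.
done.
Qed.

Theorem theorem1 (X : Type) (a : nat -> nat -> X) :
  eventually_periodic (interleave_output a) <->
  exists i : nat, eventually_periodic (a i).
Proof. split; [exact: forward | exact: backward]. Qed.
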